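(* Let $Y$ be a locally compact metrizable space and let $\Phi\colon\mathbb{R}\curvearrowright Y$ be a continuous action with bounded periods. Then the orbit space $Y/\mathbb{R}$ is metrizable.
   Context: The action has bounded periods if there is $R>0$ such that for every $y\in Y$ the orbit $\Phi_{\mathbb{R}}(y)$ equals $\{\Phi_t(y): t\in[0,R]\}$. $Y/\mathbb{R}$ carries the quotient topology. *)

(* Defs.v *)
From HB Require Import structures.
From mathcomp Require Import all_boot all_order all_algebra.
From mathcomp Require Import all_classical all_reals all_analysis.
Set Implicit Arguments. Unset Strict Implicit. Unset Printing Implicit Defensive.
Import Order.TTheory GRing.Theory Num.Theory numFieldNormedType.Exports.
Local Open Scope classical_set_scope.
Local Open Scope ring_scope.

Definition metrizable (R : realType) (T : topologicalType) : Prop :=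
  exists d : T -> T -> R,
    [/\ (forall x y, 0 <= d x y),
        (forall x y, d x y = 0 <-> x = y),
        (forall x y, d x y = d y x),
        (forall x y z, d x z <= d x y + d y z) &
        (forall U : set T, open U <->
           (forall x, U x -> exists2 e : R, 0 < e & [set y | d x y < e] `<=` U))].

Section OrbitSpace.
Variables (R : realType) (Y : topologicalType) (Phi : R -> Y -> Y).

Definition orbit (y : Y) : set Y := [set Phi t y | t in [set: R]].

Definition is_orbit (A : set Y) : bool := `[< exists y, A = orbit y >].
Definition orbit_space : Type := {A : set Y | is_orbit A}.

HB.instance Definition _ := [Choice of orbit_space by <:].

Lemma orbit_in (y : Y) : is_orbit (orbit y).
Proof. by apply/asboolP; exists y. Qed.

Definition orbit_proj (y : Y) : orbit_space := exist _ (orbit y) (orbit_in y).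

Definition orbit_space_open (U : set orbit_space) : Prop := open (orbit_proj @^-1` U).

Program Definition orbit_space_topology_mixin :=
  @isOpenTopological.Build orbit_space orbit_space_open _ _ _.
Next Obligation. by rewrite /orbit_space_open preimage_setT; exact: openT. Qed.
Next Obligation. by move=> ? ? ? ?; exact: openI. Qed.
Next Obligation. by move=> I f ofi; apply: bigcup_open => i _; exact: ofi. Qed.
HB.instance Definition _ := orbit_space_topology_mixin.

End OrbitSpace.

Definition continuous_action (R : realType) (Y : topologicalType)
  (Phi : R -> Y -> Y) : Prop :=
  [/\ (forall y, Phi 0 y = y),
      (forall s t y, Phi (s + t) y = Phi s (Phi t y)) &
      continuous (fun p : R * Y => Phi p.1 p.2)].

Definition bounded_periods (R : realType) (Y : topologicalType)
  (Phi : R -> Y -> Y) : Prop :=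
  exists2 r : R, 0 < r &
    forall y, orbit Phi y = [set Phi t y | t in `[0, r]].

(* Main.v *)
Require Import Defs.
From HB Require Import structures.
From mathcomp Require Import all_boot all_order all_algebra.
From mathcomp Require Import all_classical all_reals all_analysis.
From mathcomp Require Import lra.
Import Order.TTheory GRing.Theory Num.Theory numFieldNormedType.Exports.
Set Implicit Arguments. Unset Strict Implicit. Unset Printing Implicit Defensive.
Local Open Scope classical_set_scope.
Local Open Scope ring_scope.

Section Main.
Variables (R : realType) (Y : topologicalType) (Phi : R -> Y -> Y) (d : Y -> Y -> R).
Hypothesis d0 : forall x y, 0 <= d x y.
Hypothesis dT : forall x y z, d x z <= d x y + d y z.
Hypothesis dC : forall x y, d x y = d y x.
Hypothesis dE : forall x y, d x y = 0 <-> x = y.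
Hypothesis dO : forall U : set Y, open U <->
           (forall x, U x -> exists2 e : R, 0 < e & [set y | d x y < e] `<=` U).
Hypothesis P0 : forall y, Phi 0 y = y.
Hypothesis PD : forall s t y, Phi (s + t) y = Phi s (Phi t y).
Hypothesis Pc : continuous (fun p : R * Y => Phi p.1 p.2).
Variable r : R.
Hypothesis hr : forall y, Defs.orbit Phi y = [set Phi t y | t in `[0, r]].

Definition e x y := Num.min (d x y) 1.

Lemma e0 x y : 0 <= e x y.
Proof. by rewrite /e le_min d0 ler01. Qed.
Lemma e1 x y : e x y <= 1.
Proof. by rewrite /e ge_min lexx orbT. Qed.
Lemma eC x y : e x y = e y x.
Proof. by rewrite /e dC. Qed.
Lemma eT x y z : e x z <= e x y + e y z.
Proof.
rewrite /e; have := dT x y z; have := d0 x y; have := d0 y z.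
move: (d x y) (d y z) (d x z) => a b c.
rewrite !minEle; case: (leP c 1); case: (leP a 1); case: (leP b 1); move=> *; lra.
Qed.

Definition dist x (A : set Y) := inf [set e x a | a in A].

Lemma dist_lb x A : has_lbound [set e x a | a in A].
Proof. by exists 0 => _ [a _ <-]; exact: e0. Qed.

Lemma dist_le x A a : A a -> dist x A <= e x a.
Proof. by move=> Aa; apply: ge_inf; [exact: dist_lb | exists a]. Qed.

Lemma dist_glb x A c : A !=set0 -> (forall a, A a -> c <= e x a) -> c <= dist x A.
Proof.
move=> [a Aa] h; apply: lb_le_inf; first by exists (e x a), a.
by move=> _ [b Bb <-]; exact: h.
Qed.

Lemma dist_ge0 x A : A !=set0 -> 0 <= dist x A.
Proof. by move=> A0; apply: dist_glb => // a _; exact: e0. Qed.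

Lemma dist_lt x A c : A !=set0 -> dist x A < c -> exists2 a, A a & e x a < c.
Proof.
move=> [a Aa] /inf_lt []; first by exists (e x a), a.
by move=> _ [b Bb <-] h; exists b.
Qed.

Lemma dist_le1 x A : A !=set0 -> dist x A <= 1.
Proof. by move=> [a Aa]; apply: le_trans (dist_le x Aa) (e1 _ _). Qed.

Lemma dist_tri x y A : A !=set0 -> dist x A <= e x y + dist y A.
Proof.
move=> A0; rewrite -lerBlDl; apply: dist_glb => // a Aa.
by rewrite lerBlDl; apply: le_trans (dist_le x Aa) (eT x y a).
Qed.

Definition sdist (A B : set Y) := sup [set dist a B | a in A].

Lemma sdist_ge A B a : B !=set0 -> A a -> dist a B <= sdist A B.
Proof.
move=> B0 Aa; apply: ub_le_sup; last by exists a.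
by exists 1 => _ [b _ <-]; exact: dist_le1.
Qed.

Lemma sdist_le A B c : A !=set0 -> (forall a, A a -> dist a B <= c) -> sdist A B <= c.
Proof.
move=> [a Aa] h; apply: ge_sup; first by exists (dist a B), a.
by move=> _ [b Bb <-]; exact: h.
Qed.

Definition hd A B := Num.max (sdist A B) (sdist B A).

Lemma hdC A B : hd A B = hd B A.
Proof. by rewrite /hd maxC. Qed.

Lemma hd_ge0 A B : A !=set0 -> B !=set0 -> 0 <= hd A B.
Proof.
move=> [a Aa] B0; rewrite /hd le_max; apply/orP; left.
by apply: le_trans (dist_ge0 a B0) (sdist_ge B0 Aa).
Qed.

Lemma hd_ge A B a : A !=set0 -> B !=set0 -> A a -> dist a B <= hd A B.
Proof.
by move=> A0 B0 Aa; rewrite /hd le_max (sdist_ge B0 Aa).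
Qed.

Lemma hd_le A B c : A !=set0 -> B !=set0 -> (forall a, A a -> dist a B <= c) ->
  (forall b, B b -> dist b A <= c) -> hd A B <= c.
Proof.
by move=> A0 B0 h1 h2; rewrite /hd ge_max !sdist_le.
Qed.

Lemma hd_tri A B C : A !=set0 -> B !=set0 -> C !=set0 -> hd A C <= hd A B + hd B C.
Proof.
move=> A0 B0 C0.
have key : forall A B C, A !=set0 -> B !=set0 -> C !=set0 ->
    forall a, A a -> dist a C <= hd A B + hd B C.
  move=> A1 B1 C1 A10 B10 C10 a Aa.
  rewrite -lerBlDr; apply: le_trans (hd_ge A10 B10 Aa).
  apply: dist_glb => // b Bb.
  rewrite lerBlDr; apply: le_trans (dist_tri a b C10) _.
  by rewrite lerD2l; apply: hd_ge.
apply: hd_le => //; first exact: key.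
by move=> c Cc; rewrite addrC (hdC B C) (hdC A B); apply: key.
Qed.

Lemma hd_refl A : A !=set0 -> hd A A = 0.
Proof.
move=> A0; apply/eqP; rewrite eq_le hd_ge0 // andbT.
apply: hd_le => // a Aa; apply: le_trans (dist_le a Aa) _;
  by rewrite /e (dE a a).2 // ge_min lexx.
Qed.

Lemma ball_open x eps : open [set z | d x z < eps].
Proof.
apply/dO => z /= hz; exists (eps - d x z); first by rewrite subr_gt0.
by move=> w /= hw; have := dT x z w; lra.
Qed.

Lemma ball_nbhs x eps : 0 < eps -> nbhs x [set z | d x z < eps].
Proof.
by move=> he; apply: open_nbhs_nbhs; split; [exact: ball_open | rewrite /= (dE x x).2].
Qed.

Lemma nbhs_ball x U : nbhs x U -> exists2 eps, 0 < eps & [set z | d x z < eps] `<=` U.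
Proof.
rewrite nbhsE => -[V [oV Vx] VU]; have [eps e0 h] := (dO V).1 oV x Vx.
by exists eps => // z /h; exact: VU.
Qed.

Lemma hausY : hausdorff_space Y.
Proof.
move=> p q cl; apply/(dE p q).1; apply/eqP; rewrite eq_le d0 andbT; apply/negP => /negP.
rewrite -ltNge => hpq.
have h2 : 0 < d p q / 2 by rewrite divr_gt0.
have [z [/= h1 h3]] := cl _ _ (ball_nbhs p h2) (ball_nbhs q h2).
have := dT p z q; rewrite (dC z q); lra.
Qed.

Lemma unif y eps : 0 < eps -> exists2 del, 0 < del & forall z, d y z < del ->
  forall t, [set` `[0, r]] t -> d (Phi t y) (Phi t z) < eps.
Proof.
move=> he.
have cK := @segment_compact R 0 r.
have /compact_near_coveringP cov := cK.
have h2 : 0 < eps / 2 by rewrite divr_gt0.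
have hcov : forall t, [set` `[0, r]] t -> \forall t' \near t & z \near nbhs y,
    d (Phi t' y) (Phi t' z) < eps.
  move=> t _.
  have := @Pc (t, y) _ (ball_nbhs (Phi t y) h2).
  move=> [[A B] /= [nA nB] sub].
  exists (A, B) => //= -[t' z] /= [At' Bz].
  have h1 := sub (t', z) (conj At' Bz).
  have h3 := sub (t', y) (conj At' (nbhs_singleton nB)).
  move: h1 h3 => /= h1 h3.
  have := dT (Phi t' y) (Phi t y) (Phi t' z); rewrite (dC _ (Phi t y)); lra.
have [del hdel hb] := nbhs_ball (cov Y (nbhs y) (fun z t => d (Phi t y) (Phi t z) < eps) _ hcov).
by exists del => // z /hb.
Qed.


Lemma orbit_mem y : Defs.orbit Phi y y.
Proof. by exists 0 => //; rewrite P0. Qed.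

Lemma orbit_same y z : Defs.orbit Phi y z -> Defs.orbit Phi z = Defs.orbit Phi y.
Proof.
move=> [s _ <-]; apply/seteqP; split => w [t _ <-].
- by exists (t + s) => //; rewrite PD.
- by exists (t - s) => //; rewrite -PD subrK.
Qed.

Lemma orbit_compact y : compact (Defs.orbit Phi y).
Proof.
rewrite hr; apply: continuous_compact; last exact: segment_compact.
apply: continuous_subspaceT => t.
apply: (@continuous_comp _ _ _ (fun s => (s, y)) (fun p : R * Y => Phi p.1 p.2) t); last exact: Pc.
move=> A; case=> -[A1 B1] /= [nA1 nB1] sub; apply: filterS nA1 => s A1s; apply: sub; split => //; exact: nbhs_singleton.
Qed.

Lemma orbit_closed y : closed (Defs.orbit Phi y).
Proof. exact: (compact_closed hausY (@orbit_compact y)). Qed.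

Lemma proj_surj (O : orbit_space Phi) : exists y, O = orbit_proj Phi y.
Proof.
case: O => A hA; have /asboolP [y Ay] := hA; exists y; exact: val_inj.
Qed.

Lemma val_ne (O : orbit_space Phi) : sval O !=set0.
Proof. by have [y ->] := proj_surj O; exists y; exact: orbit_mem. Qed.

Lemma proj_eq y z : Defs.orbit Phi y z -> orbit_proj Phi z = orbit_proj Phi y.
Proof. by move=> h; apply: val_inj => /=; exact: orbit_same. Qed.

Lemma e_lt x y eps : e x y < Num.min eps 1 -> d x y < eps.
Proof. by rewrite /e !minEle; case: (leP (d x y) 1); case: (leP eps 1) => *; lra. Qed.

Lemma e_le x y : e x y <= d x y.
Proof. by rewrite /e ge_min lexx. Qed.

Lemma main_res : metrizable R (orbit_space Phi).
Proof.
exists (fun O1 O2 => hd (sval O1) (sval O2)); split.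
- by move=> O1 O2; apply: hd_ge0; apply: val_ne.
- move=> O1 O2; split; last by move=> ->; apply: hd_refl; apply: val_ne.
  have [y1 ->] := proj_surj O1; have [y2 ->] := proj_surj O2 => /= h.
  have hd0 : dist y1 (Defs.orbit Phi y2) = 0.
    apply/eqP; rewrite eq_le dist_ge0 ?andbT; last exact: (val_ne (orbit_proj Phi y2)).
    by rewrite -h; apply: hd_ge => //; [exact: (val_ne (orbit_proj Phi y1)) | exact: (val_ne (orbit_proj Phi y2)) | exact: orbit_mem].
  suff : Defs.orbit Phi y2 y1 by move/proj_eq.
  apply: orbit_closed => B nB; have [eps he hb] := nbhs_ball nB.
  have hlt : dist y1 (Defs.orbit Phi y2) < Num.min eps 1 by rewrite hd0 lt_min he ltr01.
  have [a ha hl] := dist_lt (val_ne (orbit_proj Phi y2)) hlt.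
  by exists a; split => //; apply: hb; exact: e_lt.
- by move=> O1 O2; apply: hdC.
- by move=> O1 O2 O3; apply: hd_tri; apply: val_ne.
- move=> U; rewrite /open /= /orbit_space_open; split.
  + move=> oU O UO; have [y Oy] := proj_surj O; subst O.
    have [eps he hb] := (dO _).1 oU y UO.
    exists (Num.min eps 1); first by rewrite lt_min he ltr01.
    move=> O' /= hO'; have [z Oz] := proj_surj O'; subst O'; move: hO' => /= hO'.
    have hlt : dist y (Defs.orbit Phi z) < Num.min eps 1.
      apply: le_lt_trans hO'; apply: hd_ge; [exact: (val_ne (orbit_proj Phi y)) | exact: (val_ne (orbit_proj Phi z)) | exact: orbit_mem].
    have [a az ha] := dist_lt (val_ne (orbit_proj Phi z)) hlt.
    have := hb a (e_lt ha); rewrite /preimage /= (proj_eq az); exact.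
  + move=> h; apply/dO => y /= Uy.
    have [eps he hb] := h _ Uy.
    have he2 : 0 < eps / 2 by rewrite divr_gt0.
    have [del hdel hu] := @unif y _ he2.
    exists del => // z /= hz; apply: hb => /=.
    have ney := val_ne (orbit_proj Phi y); have nez := val_ne (orbit_proj Phi z).
    apply: (@le_lt_trans _ _ (eps / 2)); last by lra.
    apply: hd_le => //=.
    * move=> a; rewrite hr => -[t ht <-].
      have zt : Defs.orbit Phi z (Phi t z) by rewrite hr; exists t.
      apply: le_trans (dist_le _ zt) _; apply: le_trans (e_le _ _) _.
      exact/ltW/hu.
    * move=> b; rewrite hr => -[t ht <-].
      have yt : Defs.orbit Phi y (Phi t y) by rewrite hr; exists t.
      apply: le_trans (dist_le _ yt) _; rewrite eC; apply: le_trans (e_le _ _) _.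
      exact/ltW/hu.
Qed.

End Main.

Theorem lemma5p2 (R : realType) (Y : topologicalType) (Phi : R -> Y -> Y) :
  locally_compact [set: Y] ->
  metrizable R Y ->
  continuous_action Phi ->
  bounded_periods Phi ->
  metrizable R (orbit_space Phi).
Proof.
move=> _ [d [d0 dE dC dT dO]] [P0 PD Pc] [r _ hr].
exact: (main_res d0 dT dC dE dO P0 PD Pc hr).
Qed.
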